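(* Let $A\in M_n(R)$ be a definite matrix. Then $A^{\nabla}\cong_\nu A^*\cong_\nu A^{n-1}$, where $A^*=\sum_{i\geq 0}A^i$ is the Kleene star of $A$.
   Context: Supertropical semiring $R=T\cup G\cup\{-\infty\}$: $T=\mathcal G$ an ordered abelian group (tangible), $G=\{a^\nu\}$ a copy (ghost); $a+b$ is the element of larger $\nu$-value if the $\nu$-values differ and $a^\nu$ if equal; multiplication adds $\nu$-values, is ghost if a factor is ghost, $-\infty$ absorbing; $0_R=-\infty$, $1_R=0$. Matrix operations use these operations; $A^0=I$ (identity: $1_R$ on diagonal, $0_R$ off it). $A\cong_\nu B$ means entrywise equality of $\nu$-values. $\det(A)=\sum_{\sigma\in S_n}\prod_i a_{i,\sigma(i)}$; $\operatorname{adj}(A)_{i,j}=\det(A_{j,i})$ (minor deleting row $j$, column $i$); $A^\nabla=\det(A)^{-1}\operatorname{adj}(A)$ when $\det(A)\in T$. A matrix is definite if all diagonal entries are $1_R$ and $\det(A)=1_R$. *)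

(* Defs.v *)
From HB Require Import structures.
From mathcomp Require Import all_boot all_order ssralg fingroup perm matrix.
Set Implicit Arguments. Unset Strict Implicit. Unset Printing Implicit Defensive.
Import Order.TTheory GRing.Theory.

HB.mixin Record isOrderedAbGroup d (G : Type) of Order.Total d G & GRing.Zmodule G := {
  oag_leD2r : forall x y z : G, (x <= y)%O -> ((x + z)%R <= (y + z)%R)%O }.
#[short(type="orderedAbGroupType")]
HB.structure Definition OrderedAbGroup d :=
  { G of isOrderedAbGroup d G & Order.Total d G & GRing.Zmodule G }.

Section Supertropical.
Variables (d : Order.disp_t) (G : orderedAbGroupType d).

(* R = T ∪ G ∪ {-oo} : Ninf = -oo = 0_R, Tan a = tangible a, Gh a = ghost a^nu *)
Inductive st := Ninf | Tan of G | Gh of G.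

(* nu-value: None stands for -oo *)
Definition nu (x : st) : option G :=
  match x with Ninf => None | Tan a => Some a | Gh a => Some a end.

Definition splus (x y : st) : st :=
  match x, y with
  | Ninf, _ => y
  | _, Ninf => x
  | (Tan a | Gh a), (Tan b | Gh b) =>
      if (a < b)%O then y else if (b < a)%O then x else Gh a
  end.

Definition smul (x y : st) : st :=
  match x, y with
  | Ninf, _ => Ninf
  | _, Ninf => Ninf
  | Tan a, Tan b => Tan (a + b)%R
  | Tan a, Gh b | Gh a, Tan b | Gh a, Gh b => Gh (a + b)%R
  end.

Definition one_st : st := Tan 0%R.   (* 1_R = 0 *)

Definition nu_mx_eq m n (A B : 'M[st]_(m, n)) : Prop :=
  forall i j, nu (A i j) = nu (B i j).

Definition smx_add n (A B : 'M[st]_n) : 'M[st]_n :=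
  \matrix_(i, j) splus (A i j) (B i j).

Definition smx_mul n (A B : 'M[st]_n) : 'M[st]_n :=
  \matrix_(i, j) \big[splus/Ninf]_(k < n) smul (A i k) (B k j).

Definition smx_id n : 'M[st]_n := \matrix_(i, j) if i == j then one_st else Ninf.

Fixpoint smx_pow n (A : 'M[st]_n) (k : nat) : 'M[st]_n :=
  match k with 0 => smx_id n | k'.+1 => smx_mul (smx_pow A k') A end.

Definition sdet n (A : 'M[st]_n) : st :=
  \big[splus/Ninf]_(s : 'S_n) \big[smul/one_st]_(i < n) A i (s i).

Definition sadj n (A : 'M[st]_n) : 'M[st]_n :=
  \matrix_(i, j) sdet (col' i (row' j A)).

(* A^nabla = det(A)^{-1} adj(A), meaningful when det(A) is tangible *)
Definition snabla n (A : 'M[st]_n) : 'M[st]_n :=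
  match sdet A with
  | Tan a => \matrix_(i, j) smul (Tan (- a)%R) (sadj A i j)
  | _ => sadj A
  end.

Definition definite n (A : 'M[st]_n) : Prop :=
  (forall i, A i i = one_st) /\ sdet A = one_st.

Fixpoint kleene_psum n (A : 'M[st]_n) (m : nat) : 'M[st]_n :=
  match m with 0 => smx_id n | m'.+1 => smx_add (kleene_psum A m') (smx_pow A m) end.

Definition kleene_star n (A : 'M[st]_n) (S : 'M[st]_n) : Prop :=
  exists N, forall m, (N <= m)%N -> kleene_psum A m = S.

End Supertropical.

(* Main.v *)
Require Import Defs.
From HB Require Import structures.
From mathcomp Require Import all_boot all_order ssralg fingroup perm matrix.
From mathcomp Require Import zify.
Set Implicit Arguments. Unset Strict Implicit. Unset Printing Implicit Defensive.
Import Order.TTheory GRing.Theory.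

Section Proof.
Variables (d : Order.disp_t) (G : orderedAbGroupType d).
Local Notation O := (option G).
Local Notation st := (st G).

Definition ole (a b : O) : bool :=
  match a, b with None, _ => true | Some _, None => false | Some x, Some y => (x <= y)%O end.
Definition oadd (a b : O) : O :=
  match a, b with Some x, Some y => Some (x + y)%R | _, _ => None end.

Lemma oaddA : associative oadd.
Proof. by case=> [a|] [b|] [c|] //=; rewrite addrA. Qed.
Lemma oaddC : commutative oadd.
Proof. by case=> [a|] [b|] //=; rewrite addrC. Qed.
Lemma oadd0 : left_id (Some 0%R) oadd.
Proof. by case=> [a|] //=; rewrite add0r. Qed.
HB.instance Definition _ := Monoid.isComLaw.Build O (Some 0%R) oadd oaddA oaddC oadd0.

Lemma ole_refl a : ole a a. Proof. by case: a => //= a. Qed.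
Lemma ole_trans a b c : ole a b -> ole b c -> ole a c.
Proof. by case: a => [a|] //; case: b => [b|] //; case: c => [c|] //=; apply: le_trans. Qed.
Lemma ole_anti a b : ole a b -> ole b a -> a = b.
Proof. by case: a => [a|]; case: b => [b|] //= h1 h2; rewrite (@le_anti _ _ a b) ?h1 ?h2. Qed.
Lemma ole_None a : ole None a. Proof. by []. Qed.
Lemma oleD2r a b c : ole a b -> ole (oadd a c) (oadd b c).
Proof. by case: a => [a|] //; case: b => [b|] //; case: c => [c|] //=; apply: oag_leD2r. Qed.
Lemma oleD2l a b c : ole a b -> ole (oadd c a) (oadd c b).
Proof. by rewrite ![oadd c _]oaddC; apply: oleD2r. Qed.
Lemma oleD a b c e : ole a b -> ole c e -> ole (oadd a c) (oadd b e).
Proof. by move=> h1 h2; apply: ole_trans (oleD2r c h1) (oleD2l b h2). Qed.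
Lemma oadd_le0 a b : ole a (Some 0%R) -> ole (oadd b a) b.
Proof. by move=> h; have := oleD2l b h; rewrite [oadd b (Some 0%R)]oaddC oadd0. Qed.

Lemma nu_smul (x y : st) : nu (smul x y) = oadd (nu x) (nu y).
Proof. by case: x => [|a|a]; case: y => [|b|b]. Qed.
Lemma nu_one : nu (one_st G) = Some 0%R. Proof. by []. Qed.

Lemma nu_prod (I : Type) (r : seq I) (P : pred I) (F : I -> st) :
  nu (\big[@smul _ G/one_st G]_(i <- r | P i) F i) = \big[oadd/Some 0%R]_(i <- r | P i) nu (F i).
Proof. by apply: (big_morph (@nu d G)); [exact: nu_smul | exact: nu_one]. Qed.

Lemma nu_splus (x y : st) :
  [/\ ole (nu x) (nu (splus x y)), ole (nu y) (nu (splus x y)) &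
      (nu (splus x y) = nu x \/ nu (splus x y) = nu y)].
Proof.
case: x => [|a|a]; case: y => [|b|b] /=; rewrite ?lexx; try by split => //; auto.
all: by case: (ltgtP a b) => [h|h|<-] /=; rewrite ?lexx ?(ltW h); split => //; auto.
Qed.

Lemma splus_eqnu (x y : st) : nu x = nu y ->
  splus x y = match nu x with Some a => Gh a | None => Ninf G end.
Proof.
by case: x => [|a|a]; case: y => [|b|b] //= [<-]; rewrite ltxx.
Qed.

Lemma sum_ge (I : eqType) (r : seq I) (P : pred I) (F : I -> st) i :
  i \in r -> P i -> ole (nu (F i)) (nu (\big[@splus _ G/Ninf G]_(j <- r | P j) F j)).
Proof.
elim: r => [|k r IH] //; rewrite inE big_cons => /orP [/eqP<- ->|ir Pi].
  by case: (nu_splus (F i) (\big[@splus _ G/Ninf G]_(j <- r | P j) F j)).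
case: ifP => _; last exact: IH.
case: (nu_splus (F k) (\big[@splus _ G/Ninf G]_(j <- r | P j) F j)) => _ h _.
exact: ole_trans (IH ir Pi) h.
Qed.

Lemma sum_att (I : eqType) (r : seq I) (P : pred I) (F : I -> st) :
  nu (\big[@splus _ G/Ninf G]_(j <- r | P j) F j) = None \/
  exists2 i, (i \in r) && P i & nu (\big[@splus _ G/Ninf G]_(j <- r | P j) F j) = nu (F i).
Proof.
elim: r => [|k r IH]; first by rewrite big_nil; left.
rewrite big_cons; case: ifP => Pk.
  case: (nu_splus (F k) (\big[@splus _ G/Ninf G]_(j <- r | P j) F j)) => _ _ [->|->].
    by right; exists k; rewrite ?inE ?eqxx ?Pk.
  case: IH => [->|[i /andP[ir Pi] ->]]; first by left.
  by right; exists i; rewrite // inE ir orbT.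
case: IH => [->|[i /andP[ir Pi] ->]]; first by left.
by right; exists i; rewrite // inE ir orbT.
Qed.


Lemma sum_ge_fin (I : finType) (F : I -> st) i :
  ole (nu (F i)) (nu (\big[@splus _ G/Ninf G]_(j : I) F j)).
Proof. exact: (@sum_ge I (index_enum I) predT F i (mem_index_enum i) isT). Qed.

Lemma sum_att_fin (I : finType) (F : I -> st) :
  nu (\big[@splus _ G/Ninf G]_(j : I) F j) = None \/
  exists i, nu (\big[@splus _ G/Ninf G]_(j : I) F j) = nu (F i).
Proof.
case: (@sum_att I (index_enum I) predT F) => [->|[i _ ->]]; [by left|by right; exists i].
Qed.

Lemma smulA : associative (@smul d G).
Proof. by case=> [|a|a] [|b|b] [|c|c] //=; rewrite addrA. Qed.
Lemma smulC : commutative (@smul d G).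
Proof. by case=> [|a|a] [|b|b] //=; rewrite addrC. Qed.
Lemma smul1 : left_id (one_st G) (@smul d G).
Proof. by case=> [|a|a] //=; rewrite add0r. Qed.
HB.instance Definition _ := Monoid.isComLaw.Build st (one_st G) (@smul d G) smulA smulC smul1.

Lemma last_nseq (T : Type) (y : T) k : last y (nseq k y) = y.
Proof. by elim: k. Qed.

Lemma dup_split (T : eqType) (s : seq T) : ~~ uniq s ->
  exists a z b c, s = a ++ z :: b ++ z :: c.
Proof.
elim: s => [|y s IH] //=; rewrite negb_and negbK => /orP [ys|/IH [a [z [b [c ->]]]]].
  by case/splitPr: ys => b c; exists [::], y, b, c.
by exists (y :: a), z, b, c.
Qed.

Variable n : nat.
Variable A : 'M[st]_n.+1.
Hypothesis hA : definite A.
Local Notation I := 'I_n.+1.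
Local Notation w u v := (nu (A u v)).

Fixpoint walkw (x : I) (p : seq I) : O :=
  match p with [::] => Some 0%R | y :: p' => oadd (w x y) (walkw y p') end.

Lemma walkw_cat x p q : walkw x (p ++ q) = oadd (walkw x p) (walkw (last x p) q).
Proof.
elim: p x => [|y p IH] x /=; first by case: (walkw x q) => // a /=; rewrite add0r.
by rewrite IH oaddA.
Qed.

Lemma walkw_rcons x p y : walkw x (rcons p y) = oadd (walkw x p) (w (last x p) y).
Proof. by rewrite -cats1 walkw_cat; congr oadd => /=; case: (w _ y) => //= a; rewrite addr0. Qed.

Lemma wdiag x : w x x = Some 0%R.
Proof. by case: hA => h _; rewrite h. Qed.

Lemma walkw_nseq x k : walkw x (nseq k x) = Some 0%R.
Proof. elim: k => [//|k IH]; rewrite [nseq _ _]/= [walkw _ (_ :: _)]/= IH wdiag /=; congr Some; exact: addr0. Qed.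

Lemma perm_le0 (s : 'S_n.+1) :
  ole (nu (\big[@smul _ G/one_st G]_(i < n.+1) A i (s i))) (Some 0%R).
Proof.
case: hA => _ h.
move: (sum_ge (fun s : 'S_n.+1 => \big[@smul _ G/one_st G]_(i < n.+1) A i (s i)) (mem_index_enum s) (isT : predT s)).
by rewrite [X in ole _ (nu X)](_ : _ = sdet A) // h.
Qed.

Local Notation P k := (smx_pow A k).

Lemma powS k i j : P k.+1 i j = \big[@splus _ G/Ninf G]_(l < n.+1) smul (P k i l) (A l j).
Proof. by rewrite /= /smx_mul mxE. Qed.

Lemma pow_walk_ge i p : ole (walkw i p) (nu (P (size p) i (last i p))).
Proof.
elim/last_ind: p => [|p y IH].
  by rewrite /= /smx_id mxE eqxx /= lexx.
rewrite size_rcons last_rcons walkw_rcons powS.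
apply: ole_trans _ (sum_ge_fin (fun l => smul (P (size p) i l) (A l y)) (last i p)).
by rewrite nu_smul; apply: oleD2r.
Qed.

Lemma pow_walk_att i k j : nu (P k i j) = None \/
  exists p, [/\ size p = k, last i p = j & nu (P k i j) = walkw i p].
Proof.
elim: k j => [|k IH] j.
  rewrite /= /smx_id mxE; case: eqP => [<-|_]; last by left.
  by right; exists [::].
rewrite powS; case: (sum_att_fin (fun l => smul (P k i l) (A l j))) => [->|[l ->]]; first by left.
rewrite nu_smul; case: (IH l) => [->|[p [sp lp ->]]]; first by left.
by right; exists (rcons p j); rewrite size_rcons last_rcons walkw_rcons lp sp.
Qed.

Lemma pow_mono k i j : ole (nu (P k i j)) (nu (P k.+1 i j)).
Proof.
rewrite powS; apply: ole_trans _ (sum_ge_fin (fun l => smul (P k i l) (A l j)) j).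
by rewrite nu_smul wdiag [oadd _ (Some 0%R)]oaddC oadd0 ole_refl.
Qed.

Definition term (S : 'S_n.+1) (y : I) := \big[@smul _ G/one_st G]_(r | y != r) A r (S r).

Lemma lift_term x y (s : 'S_n) :
  \big[@smul _ G/one_st G]_(k < n) (col' x (row' y A)) k (s k) = term (lift_perm y x s) y.
Proof.
rewrite /term; case: (pickP 'I_n) => [k0 _ | n0]; last first.
  by rewrite !big1 // => [j /unlift_some[i] | i _]; have:= n0 i.
rewrite (reindex (lift y)).
  by apply: eq_big => [k | k _] /=; rewrite ?neq_lift // !mxE lift_perm_lift.
exists (fun k => odflt k0 (unlift y k)) => k; first by rewrite liftK.
by case/unlift_some=> k' -> ->.
Qed.

Lemma adj_ge x y (S : 'S_n.+1) : S y = x -> ole (nu (term S y)) (nu (sadj A x y)).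
Proof.
move=> Syx.
pose f k := odflt k (unlift x (S (lift y k))).
have fK k : lift x (f k) = S (lift y k).
  rewrite /f; have : x != S (lift y k) by rewrite -Syx (inj_eq perm_inj) neq_lift.
  by case/unlift_some => k' -> ->.
have finj : injective f by move=> k1 k2 /(congr1 (lift x)); rewrite !fK => /perm_inj /lift_inj.
have -> : S = lift_perm y x (perm finj).
  apply/permP => r; case: (unliftP y r) => [k|] ->; last by rewrite lift_perm_id.
  by rewrite lift_perm_lift permE fK.
rewrite -lift_term /sadj mxE /sdet.
exact: (sum_ge_fin (fun s : 'S_n => \big[@smul _ G/one_st G]_(k < n) (col' x (row' y A)) k (s k))).
Qed.

Lemma adj_att x y : nu (sadj A x y) = None \/
  exists2 S : 'S_n.+1, S y = x & nu (sadj A x y) = nu (term S y).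
Proof.
rewrite /sadj mxE /sdet.
case: (sum_att_fin (fun s : 'S_n => \big[@smul _ G/one_st G]_(k < n) (col' x (row' y A)) k (s k))) => [->|[s ->]]; first by left.
by right; exists (lift_perm y x s); rewrite ?lift_perm_id ?lift_term.
Qed.

Lemma adj_close x y : ole (oadd (nu (sadj A x y)) (w y x)) (Some 0%R).
Proof.
case: (adj_att x y) => [->|[S Syx ->]] //.
have E : \big[@smul _ G/one_st G]_(i < n.+1) A i (S i) = smul (A y (S y)) (term S y).
  by rewrite (bigD1 y) //= /term; congr smul; apply: eq_bigl => r; rewrite eq_sym.
by rewrite -Syx -nu_smul smulC -E; exact: perm_le0.
Qed.


Lemma term_split (S : 'S_n.+1) x q : uniq (x :: q) -> path (frel S) x q ->
  nu (term S (last x q)) =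
  oadd (walkw x q) (\big[oadd/Some 0%R]_(r | r \notin x :: q) w r (S r)).
Proof.
move=> U pth.
have path_walk : forall x q, path (frel S) x q ->
    walkw x q = \big[oadd/Some 0%R]_(r <- belast x q) w r (S r).
  move=> {U pth x q} x0 q0; elim: q0 x0 => [|y q0 IH] x0 /=; first by rewrite big_nil.
  by move=> /andP[/eqP <- h]; rewrite big_cons IH.
rewrite /term nu_prod (bigID (fun r => r \in belast x q)) /=.
move: U; rewrite lastI rcons_uniq => /andP[yb ub].
congr oadd.
  rewrite path_walk // (big_uniq _ ub); apply: eq_bigl => r.
  case: (boolP (r \in belast x q)) => rb; rewrite ?andbT ?andbF //.
  by apply: contraNneq _ yb => ->.
by apply: eq_bigl => r; rewrite mem_rcons inE negb_or eq_sym.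
Qed.

Lemma simple_bound x q : uniq (x :: q) -> ole (walkw x q) (nu (sadj A x (last x q))).
Proof.
move=> U.
pose sg := perm (can_inj (prev_next U)).
have sgE r : sg r = next (x :: q) r by rewrite permE.
have := cycle_next U; rewrite /= rcons_path => /andP[pq /eqP hl].
have hsg : sg (last x q) = x by rewrite sgE.
have pth : path (frel sg) x q.
  by rewrite (@eq_path _ _ (frel (next (x :: q)))) // => a b /=; rewrite sgE.
apply: ole_trans _ (adj_ge hsg); rewrite (term_split U pth).
rewrite big1 => [|r rn]; last by rewrite sgE next_nth (negbTE rn) wdiag.
by rewrite [oadd _ (Some 0%R)]oaddC oadd0 ole_refl.
Qed.


Lemma closed_le0 x p : last x p = x -> ole (walkw x p) (Some 0%R).
Proof.
move: {2}(size p) (leqnn (size p)) => k; elim: k x p => [|k IH] x p.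
  by case: p => //= _ _; rewrite lexx.
move=> sp lp.
case U: (uniq p).
  case/lastP: p sp lp U => [|q y] sp lp U; first by rewrite /= lexx.
  rewrite last_rcons in lp; subst y.
  rewrite rcons_uniq in U; move/andP: U => [xq uq].
  rewrite walkw_rcons; apply: ole_trans (adj_close x (last x q)).
  by apply: oleD2r; apply: simple_bound; rewrite /= xq uq.
case/dup_split: (negbT U) => a [z [b [c E]]]; subst p.
have E1 : a ++ z :: b ++ z :: c = rcons a z ++ (rcons b z ++ c) by rewrite !cat_rcons.
have E2 : a ++ z :: c = rcons a z ++ c by rewrite cat_rcons.
move: lp; rewrite last_cat /= last_cat /= => lp.
have h1 := IH x (a ++ z :: c).
have h2 := IH z (rcons b z).
rewrite E1 walkw_cat walkw_cat !last_rcons.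
rewrite E2 walkw_cat last_rcons in h1.
move: sp; rewrite !size_cat /= size_cat /= => sp.
have {h1} h1 : ole (oadd (walkw x (rcons a z)) (walkw z c)) (Some 0%R).
  by apply: h1; rewrite ?size_cat ?size_rcons ?last_cat ?last_rcons //; lia.
have {h2} h2 : ole (walkw z (rcons b z)) (Some 0%R).
  by apply: h2; rewrite ?size_rcons ?last_rcons //; lia.
apply: ole_trans h1.
rewrite oaddA [oadd (walkw x _) (walkw z (rcons b z))]oaddC -oaddA.
by rewrite oaddC; apply: oadd_le0.
Qed.


Lemma reduce x p : exists2 q, uniq (x :: q) & last x q = last x p /\ ole (walkw x p) (walkw x q).
Proof.
move: {2}(size p) (leqnn (size p)) => k; elim: k x p => [|k IH] x p.
  by case: p => // _; exists [::] => //; split; rewrite // /= lexx.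
move=> sp.
case U: (uniq (x :: p)); first by exists p => //; split; rewrite ?ole_refl.
case/dup_split: (negbT U) => a [z [b [c E]]].
case: a E => [|y a] /= [Ex Ep]; subst p.
  subst z.
  have [|q Uq [lq hq]] := IH x c; first by move: sp; rewrite size_cat /=; lia.
  exists q => //; split; first by rewrite lq last_cat /=.
  apply: ole_trans hq.
  rewrite -cat_rcons walkw_cat last_rcons oaddC; apply: oadd_le0.
  by apply: closed_le0; rewrite last_rcons.
subst y.
have [|q Uq [lq hq]] := IH x (a ++ z :: c); first by move: sp; rewrite !size_cat /= size_cat /=; lia.
exists q => //; split; first by rewrite lq !last_cat /= last_cat.
apply: ole_trans hq.
have E1 : a ++ z :: b ++ z :: c = rcons a z ++ (rcons b z ++ c) by rewrite !cat_rcons.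
have E2 : a ++ z :: c = rcons a z ++ c by rewrite cat_rcons.
rewrite E1 E2 !walkw_cat !last_rcons; apply: oleD2l.
rewrite oaddC; apply: oadd_le0.
by apply: closed_le0; rewrite last_rcons.
Qed.

Lemma walk_adj x p : ole (walkw x p) (nu (sadj A x (last x p))).
Proof.
have [q Uq [lq hq]] := reduce x p.
by apply: ole_trans hq _; rewrite -lq; apply: simple_bound.
Qed.

Lemma pow_le_adj k i j : ole (nu (P k i j)) (nu (sadj A i j)).
Proof.
case: (pow_walk_att i k j) => [->|[p [_ <- ->]]] //.
exact: walk_adj.
Qed.

Lemma adj_le_pow i j : ole (nu (sadj A i j)) (nu (P n i j)).
Proof.
case: (adj_att i j) => [->|[S Sji ->]] //.
have Sinj : injective S := @perm_inj _ S.
have m0 : 0 < fingraph.order S i := fingraph.order_gt0 _ _.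
have mle : fingraph.order S i <= n.+1.
  by rewrite /fingraph.order; apply: leq_trans (max_card _) _; rewrite card_ord.
have im : iter (fingraph.order S i) S i = i := fingraph.iter_order Sinj i.
have jE : iter (fingraph.order S i).-1 S i = j.
  by apply: Sinj; rewrite -iterS prednK // im Sji.
pose q := traject S (S i) (fingraph.order S i).-1.
have oE : fingraph.orbit S i = i :: q by rewrite /fingraph.orbit -{1}(prednK m0) trajectS.
have U : uniq (i :: q) by rewrite -oE fingraph.orbit_uniq.
have lq : last i q = j by rewrite last_traject jE.
have pth : path (frel S) i q := fpath_traject S i _.
rewrite -{1}lq (term_split U pth).
have cl r : r \notin i :: q -> S r \notin i :: q.
  rewrite -oE -!fconnect_orbit; apply: contra => h.
  apply: connect_trans h _; rewrite fconnect_sym //; exact: fconnect1.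
pose tau r := if r \in i :: q then r else S r.
have tinj : injective tau.
  move=> r1 r2; rewrite /tau; case: ifP => h1; case: ifP => h2 //.
  - by move=> E; move: (cl r2 (negbT h2)); rewrite -E h1.
  - by move=> E; move: (cl r1 (negbT h1)); rewrite E h2.
  - exact: Sinj.
have R0 := perm_le0 (perm tinj).
rewrite nu_prod (bigID (fun r => r \in i :: q)) /= in R0.
rewrite big1 in R0 => [|r rc]; last by rewrite permE /tau rc wdiag.
rewrite oadd0 in R0.
have {}R0 : ole (\big[oadd/Some 0%R]_(r | r \notin i :: q) w r (S r)) (Some 0%R).
  by move: R0; congr (is_true (ole _ _)); apply: eq_big => // r rc; rewrite permE /tau (negbTE rc).
apply: ole_trans (oadd_le0 _ R0) _.
have -> : walkw i q = walkw i (q ++ nseq (n - size q) j).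
  by rewrite walkw_cat lq walkw_nseq [oadd _ (Some 0%R)]oaddC oadd0.
have sq : size q <= n by rewrite size_traject; lia.
have -> : P n i j = P (size (q ++ nseq (n - size q) j)) i (last i (q ++ nseq (n - size q) j)).
  by rewrite size_cat size_nseq subnKC // last_cat lq last_nseq.
exact: pow_walk_ge.
Qed.

End Proof.

Theorem proposition3p7 (d : Order.disp_t) (G : orderedAbGroupType d) (n : nat)
    (A : 'M[st G]_n) :
  definite A ->
  exists S : 'M[st G]_n,
    kleene_star A S /\ nu_mx_eq (snabla A) S /\ nu_mx_eq S (smx_pow A n.-1).
Proof.
case: n A => [|n] A hA.
  exists A; split; last by split => -[].
  by exists 0 => m _; apply/matrixP => -[].
pose T := smx_pow A n.
have adjT i j : nu (sadj A i j) = nu (T i j).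
  by apply: ole_anti; [exact: adj_le_pow | exact: pow_le_adj].
have powT k i j : n <= k -> nu (smx_pow A k i j) = nu (T i j).
  move=> kn; apply: ole_anti.
    by apply: ole_trans (pow_le_adj hA k i j) _; rewrite -adjT ole_refl.
  rewrite -(subnKC kn); elim: (k - n) => [|e IH]; first by rewrite addn0 ole_refl.
  by apply: ole_trans IH _; rewrite addnS; apply: pow_mono.
have psum_le m i j : ole (nu (kleene_psum A m i j)) (nu (T i j)).
  elim: m => [|m IH].
    by rewrite -[kleene_psum A 0]/(smx_pow A 0) -adjT; apply: pow_le_adj.
  rewrite /= /smx_add mxE.
  case: (nu_splus (kleene_psum A m i j) (smx_pow A m.+1 i j)) => _ _ [->|->] //.
  by rewrite -adjT; apply: pow_le_adj.
have psum_ge m i j : ole (nu (smx_pow A m i j)) (nu (kleene_psum A m i j)).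
  case: m => [|m]; first by rewrite ole_refl.
  rewrite /= /smx_add mxE.
  by case: (nu_splus (kleene_psum A m i j) (smx_pow A m.+1 i j)).
have psumT m i j : n <= m -> nu (kleene_psum A m i j) = nu (T i j).
  by move=> nm; apply: ole_anti; [exact: psum_le | rewrite -(powT m) //; exact: psum_ge].
pose S : 'M[st G]_n.+1 := (\matrix_(i, j) match nu (T i j) with Some a => Gh a | None => Ninf G end)%R.
have nuS i j : nu (S i j) = nu (T i j) by rewrite mxE; case: (nu (T i j)).
exists S; split.
  exists n.+1 => -[|m] // nm; apply/matrixP => i j.
  have E : kleene_psum A m.+1 i j = splus (kleene_psum A m i j) (smx_pow A m.+1 i j).
    by rewrite [LHS]/= /smx_add mxE.
  rewrite E splus_eqnu; last by rewrite psumT // (powT m.+1) // ltnW.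
  by rewrite psumT // mxE.

split => i j; last by rewrite nuS.
rewrite nuS -adjT /snabla; case: (hA) => _ ->; rewrite /one_st mxE nu_smul.
by case: (nu (sadj A i j)) => //= a; rewrite oppr0 add0r.
Qed.
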